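(* Let $V\subsetneq(\mathbb C^* )^n$ be a proper algebraic subvariety and $\mathcal A=\operatorname{Log}(V)$. Then for a generic direction $u\in S^{n-1}$ (i.e. for all $u$ outside a closed nowhere dense subset of $S^{n-1}$) and every line $\ell=\{p+su: s\in\mathbb R\}\subset\mathbb R^n$ with direction $u$, the intersection $\mathcal A\cap\ell$ is compact.
   Context: $\operatorname{Log}(z_1,\dots,z_n)=(\log|z_1|,\dots,\log|z_n|)$; $\operatorname{Log}(V)$ is the amoeba of $V$. *)

(* Defs.v *)
From HB Require Import structures.
From mathcomp Require Import all_boot all_order all_algebra.
From mathcomp Require Import all_classical all_reals all_analysis.
From mathcomp Require Import complex.
From mathcomp Require mpoly.
Set Implicit Arguments. Unset Strict Implicit. Unset Printing Implicit Defensive.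
Import Order.TTheory GRing.Theory Num.Theory.
Import numFieldNormedType.Exports.
Local Open Scope classical_set_scope.
Local Open Scope ring_scope.

Definition cmod (R : realType) (z : complex R) : R :=
  Num.sqrt (complex.Re z ^+ 2 + complex.Im z ^+ 2).

Definition torus (R : realType) (n : nat) : set ('I_n -> complex R) :=
  [set z | forall i, z i != 0].

Definition zero_locus (R : realType) (n : nat) (S : set (mpoly.mpoly n (complex R)))
  : set ('I_n -> complex R) :=
  [set z | torus z /\ forall f, S f -> mpoly.meval z f = 0].

Definition is_subvariety (R : realType) (n : nat) (V : set ('I_n -> complex R)) : Prop :=
  exists S : set (mpoly.mpoly n (complex R)), V = zero_locus S.

Definition Log (R : realType) (n : nat) (z : 'I_n -> complex R) : 'rV[R]_n :=
  \row_i ln (cmod (z i)).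

Definition amoeba (R : realType) (n : nat) (V : set ('I_n -> complex R)) : set 'rV[R]_n :=
  (@Log R n) @` V.

Definition sphere (R : realType) (n : nat) : set 'rV[R]_n :=
  [set u | \sum_(i < n) (u ord0 i) ^+ 2 = 1].

Definition line (R : realType) (n : nat) (p u : 'rV[R]_n) : set 'rV[R]_n :=
  [set p + s *: u | s in [set: R]].

Definition nowhere_dense_in (R : realType) (n : nat) (S N : set 'rV[R]_n) : Prop :=
  forall O : set 'rV[R]_n, open O -> O `&` S `<=` N -> O `&` S = set0.

(* Main.v *)
Require Import Defs.
From HB Require Import structures.
From mathcomp Require Import all_boot all_order all_algebra.
From mathcomp Require Import all_classical all_reals all_analysis.
From mathcomp Require Import complex.
From mathcomp Require mpoly.
From mathcomp Require Import ring lra.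
Canonical mpoly.mpoly_multinom__canonical__eqtype_Equality.
Import Order.TTheory GRing.Theory Num.Theory.
Import numFieldNormedType.Exports.
Local Open Scope classical_set_scope.
Local Open Scope ring_scope.

Section Cont.
Variables (R : realType) (T : topologicalType).

Lemma sum_cont (I : Type) (r : seq I) (F : I -> T -> R) :
  (forall i, continuous (F i)) -> continuous (fun x => \sum_(i <- r) F i x).
Proof.
move=> HF; elim: r => [|a r IH].
  have -> : (fun x => \sum_(i <- [::]) F i x) = (fun=> 0) by apply/funext=> x; rewrite big_nil.
  by move=> x; exact: cst_continuous.
have -> : (fun x => \sum_(i <- a :: r) F i x) = F a + (fun x => \sum_(i <- r) F i x).
  by apply/funext=> x; rewrite big_cons.
by move=> x; apply: continuousD; [exact: HF | exact: IH].
Qed.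

Lemma prod_cont (I : Type) (r : seq I) (F : I -> T -> R) :
  (forall i, continuous (F i)) -> continuous (fun x => \prod_(i <- r) F i x).
Proof.
move=> HF; elim: r => [|a r IH].
  have -> : (fun x => \prod_(i <- [::]) F i x) = (fun=> 1) by apply/funext=> x; rewrite big_nil.
  by move=> x; exact: cst_continuous.
have -> : (fun x => \prod_(i <- a :: r) F i x) = F a \* (fun x => \prod_(i <- r) F i x).
  by apply/funext=> x; rewrite big_cons.
by move=> x; apply: continuousM; [exact: HF | exact: IH].
Qed.

End Cont.

Section PartA.
Variables (R : realType) (n : nat).

Definition dotv (d u : 'rV[R]_n) : R := \sum_i d ord0 i * u ord0 i.

Lemma dotv_cont (d : 'rV[R]_n) : continuous (dotv d).
Proof.
have := @sum_cont R 'rV[R]_n _ (index_enum 'I_n) (fun i u => d ord0 i * u ord0 i).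
apply => i x.
apply: continuousM; first exact: cst_continuous.
exact: coord_continuous.
Qed.

Lemma sphere_closed : closed (@sphere R n).
Proof.
have -> : @sphere R n = (fun u : 'rV[R]_n => \sum_(i < n) (u ord0 i) ^+ 2) @^-1` [set x | x = 1].
  by [].
move: (@closed_eq R 1); apply: (proj1 (continuous_closedP _)).
have := @sum_cont R 'rV[R]_n _ (index_enum 'I_n) (fun i u => (u ord0 i) ^+ 2).
apply => i.
have -> : (fun u : 'rV[R]_n => u ord0 i ^+ 2) = (fun u => u ord0 i) \* (fun u => u ord0 i).
  by apply/funext => u; rewrite /= expr2.
move=> x; apply: continuousM; exact: coord_continuous.
Qed.


Lemma dotv_self_gt0 (d : 'rV[R]_n) : d != 0 -> 0 < dotv d d.
Proof.
move=> dn0; rewrite lt_def sumr_ge0 ?andbT; last by move=> i _; rewrite -expr2 sqr_ge0.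
apply: contra dn0 => /eqP H; apply/eqP/rowP => i; rewrite mxE.
have Hge : forall j : 'I_n, true -> 0 <= d ord0 j * d ord0 j.
  by move=> j _; rewrite -expr2 sqr_ge0.
have := @psumr_eq0P _ _ _ _ Hge H i isT.
by move/eqP; rewrite mulf_eq0 orbb => /eqP.
Qed.

Lemma perturb (d u : 'rV[R]_n) (P : set 'rV[R]_n) :
  d != 0 -> sphere u -> dotv d u = 0 -> nbhs u P ->
  exists v, [/\ P v, sphere v & dotv d v != 0].
Proof.
move=> dn0 su du0 Pu.
set k := dotv d d.
have k0 : 0 < k := @dotv_self_gt0 d dn0.
have cpos t : 0 < 1 + t ^+ 2 * k.
  by have := sqr_ge0 t; nra.
pose c (t : R) := (1 + t ^+ 2 * k)^-1.
pose a (t : R) := 1 - t ^+ 2 * k.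
pose v (t : R) := c t *: (a t *: u + (2 * t) *: d).
have v0 : v 0 = u.
  by rewrite /v /c /a expr0n /= !mul0r addr0 subr0 invr1 scale1r mulr0 scale0r addr0 scale1r.
have cv : {for 0, continuous v}.
  apply: continuousZ.
    apply: continuousV; first by rewrite gt_eqF.
    apply: continuousD; first exact: cst_continuous.
    apply: continuousM; last exact: cst_continuous.
    have -> : (fun t : R => t ^+ 2) = id \* id by apply/funext => t; rewrite /= expr2.
    by apply: continuousM.
  apply: continuousD.
    apply: continuousZ; last exact: cst_continuous.
    apply: continuousB; first exact: cst_continuous.
    apply: continuousM; last exact: cst_continuous.
    have -> : (fun t : R => t ^+ 2) = id \* id by apply/funext => t; rewrite /= expr2.
    by apply: continuousM.
  apply: continuousZ; last exact: cst_continuous.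
  by apply: continuousM; [exact: cst_continuous|].
have : nbhs (0 : R) (v @^-1` P) by apply: cv; rewrite v0.
case/nbhs_ballP => e e0 He.
have t0 : e / 2 != 0 by rewrite mulf_neq0 // ?gt_eqF // invr_gt0.
exists (v (e / 2)); split.
- apply: He; rewrite -ball_normE /= sub0r normrN ger0_norm ?divr_ge0 ?ltW //.
  by rewrite ltr_pdivrMr // ltr_pMr // ltr1n.
- rewrite /sphere /=.
  have E : forall i, v (e/2) ord0 i ^+ 2 =
     (c (e/2) ^+ 2 * a (e/2) ^+ 2) * (u ord0 i ^+ 2)
     + (c (e/2) ^+ 2 * (2 * a (e/2) * (2 * (e/2)))) * (d ord0 i * u ord0 i)
     + (c (e/2) ^+ 2 * (2 * (e/2)) ^+ 2) * (d ord0 i * d ord0 i).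
    by move=> i; rewrite !mxE; ring.
  rewrite (eq_bigr _ (fun i _ => E i)) !big_split /= -!mulr_sumr.
  rewrite su.
  have -> : \sum_(i < n) d ord0 i * u ord0 i = 0 by exact: du0.
  rewrite -/(dotv d d) -/k mulr0 addr0 mulr1.
  rewrite /c /a.
  have hne := cpos (e / 2).
  field; rewrite gt_eqF //; have := sqr_ge0 e; nra.
- rewrite /dotv.
  have E2 : forall i, d ord0 i * v (e/2) ord0 i =
     (c (e/2) * a (e/2)) * (d ord0 i * u ord0 i) + (c (e/2) * (2 * (e/2))) * (d ord0 i * d ord0 i).
    by move=> i; rewrite !mxE; ring.
  rewrite (eq_bigr _ (fun i _ => E2 i)) big_split /= -!mulr_sumr.
  rewrite -/(dotv d u) -/(dotv d d) -/k du0 mulr0 add0r.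
  rewrite !mulf_neq0 ?gt_eqF ?invr_gt0 ?cpos //.
Qed.


Lemma open_all (ds : seq 'rV[R]_n) :
  open [set v | all (fun d => dotv d v != 0) ds].
Proof.
elim: ds => [|d ds IH].
  have -> : [set v : 'rV[R]_n | all (fun d => dotv d v != 0) [::]] = setT.
    by apply/seteqP; split.
  exact: openT.
have -> : [set v | all (fun d0 => dotv d0 v != 0) (d :: ds)] =
  (dotv d @^-1` [set x | x != 0]) `&` [set v | all (fun d => dotv d v != 0) ds].
  by apply/seteqP; split => v /=; [move/andP | move=> [-> ->]].
apply: openI => //.
apply: open_comp; last exact: open_neq.
by move=> x _; exact: dotv_cont.
Qed.

Lemma avoid (ds : seq 'rV[R]_n) : all (fun d => d != 0) ds ->
  forall (O : set 'rV[R]_n) u, open O -> O u -> sphere u ->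
  exists v, [/\ O v, sphere v & all (fun d => dotv d v != 0) ds].
Proof.
elim: ds => [|d ds IH] /=; first by move=> _ O u _ Ou su; exists u.
case/andP => dn0 Hds O u oO Ou su.
have [v1 [Ov1 sv1 Hv1]] := IH Hds O u oO Ou su.
have [dz|dnz] := eqVneq (dotv d v1) 0; last by exists v1; rewrite dnz.
have oW := openI oO (open_all ds).
have nW : nbhs v1 (O `&` [set v | all (fun d => dotv d v != 0) ds]).
  by apply: open_nbhs_nbhs; rewrite open_nbhsE; split => //; apply: open_nbhs_nbhs.
have [v2 [[Ov2 Av2] sv2 dv2]] := @perturb d v1 _ dn0 sv1 dz nW.
by exists v2; rewrite dv2.
Qed.

End PartA.
Arguments dotv {R n}.

Section PartB.
Variables (R : realType) (T : topologicalType).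
Local Open Scope complex_scope.

Lemma ReD (a b : complex R) : complex.Re (a + b) = complex.Re a + complex.Re b.
Proof. by case: a; case: b. Qed.
Lemma ImD (a b : complex R) : complex.Im (a + b) = complex.Im a + complex.Im b.
Proof. by case: a; case: b. Qed.
Lemma ReM (a b : complex R) : complex.Re (a * b) = complex.Re a * complex.Re b - complex.Im a * complex.Im b.
Proof. by case: a => a1 a2; case: b => b1 b2. Qed.
Lemma ImM (a b : complex R) : complex.Im (a * b) = complex.Re a * complex.Im b + complex.Im a * complex.Re b.
Proof. by case: a => a1 a2; case: b => b1 b2. Qed.

Definition ccont (F : T -> complex R) :=
  continuous (fun x => complex.Re (F x)) /\ continuous (fun x => complex.Im (F x)).

Lemma ccont_cst (c : complex R) : ccont (fun=> c).
Proof. by split => x; exact: cst_continuous. Qed.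

Lemma ccontD F G : ccont F -> ccont G -> ccont (fun x => F x + G x).
Proof.
move=> [F1 F2] [G1 G2]; split.
  have -> : (fun x => complex.Re (F x + G x)) = (fun x => complex.Re (F x)) + (fun x => complex.Re (G x)).
    by apply/funext => x; rewrite ReD.
  move=> x; apply: continuousD; by [apply: F1|apply: F2|apply: G1|apply: G2].
have -> : (fun x => complex.Im (F x + G x)) = (fun x => complex.Im (F x)) + (fun x => complex.Im (G x)).
  by apply/funext => x; rewrite ImD.
move=> x; apply: continuousD; by [apply: F1|apply: F2|apply: G1|apply: G2].
Qed.

Lemma ccontM F G : ccont F -> ccont G -> ccont (fun x => F x * G x).
Proof.
move=> [F1 F2] [G1 G2]; split.
  have -> : (fun x => complex.Re (F x * G x)) =
    ((fun x => complex.Re (F x)) \* (fun x => complex.Re (G x))) - ((fun x => complex.Im (F x)) \* (fun x => complex.Im (G x))).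
    by apply/funext => x; rewrite ReM.
  move=> x; apply: continuousB; apply: continuousM; by [apply: F1|apply: F2|apply: G1|apply: G2].
have -> : (fun x => complex.Im (F x * G x)) =
  ((fun x => complex.Re (F x)) \* (fun x => complex.Im (G x))) + ((fun x => complex.Im (F x)) \* (fun x => complex.Re (G x))).
  by apply/funext => x; rewrite ImM.
move=> x; apply: continuousD; apply: continuousM; by [apply: F1|apply: F2|apply: G1|apply: G2].
Qed.

Lemma ccont_sum (I : Type) (r : seq I) (F : I -> T -> complex R) :
  (forall i, ccont (F i)) -> ccont (fun x => \sum_(i <- r) F i x).
Proof.
move=> HF; elim: r => [|a r IH].
  have -> : (fun x => \sum_(i <- [::]) F i x) = (fun=> 0) by apply/funext=> x; rewrite big_nil.
  exact: ccont_cst.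
have -> : (fun x => \sum_(i <- a :: r) F i x) = (fun x => F a x + \sum_(i <- r) F i x).
  by apply/funext=> x; rewrite big_cons.
exact: ccontD.
Qed.

Lemma ccont_prod (I : Type) (r : seq I) (F : I -> T -> complex R) :
  (forall i, ccont (F i)) -> ccont (fun x => \prod_(i <- r) F i x).
Proof.
move=> HF; elim: r => [|a r IH].
  have -> : (fun x => \prod_(i <- [::]) F i x) = (fun=> 1) by apply/funext=> x; rewrite big_nil.
  exact: ccont_cst.
have -> : (fun x => \prod_(i <- a :: r) F i x) = (fun x => F a x * \prod_(i <- r) F i x).
  by apply/funext=> x; rewrite big_cons.
exact: ccontM.
Qed.

Lemma ccontX F k : ccont F -> ccont (fun x => F x ^+ k).
Proof.
move=> HF; elim: k => [|k IH].
  have -> : (fun x => F x ^+ 0) = (fun=> 1) by apply/funext=> x; rewrite expr0.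
  exact: ccont_cst.
have -> : (fun x => F x ^+ k.+1) = (fun x => F x * F x ^+ k).
  by apply/funext=> x; rewrite exprS.
exact: ccontM.
Qed.

Lemma ccont_meval (n : nat) (Z : T -> 'I_n -> complex R) (g : mpoly.mpoly n (complex R)) :
  (forall i, ccont (fun x => Z x i)) -> ccont (fun x => mpoly.meval (Z x) g).
Proof.
move=> HZ.
have -> : (fun x => mpoly.meval (Z x) g) = (fun x => \sum_(m <- mpoly.msupp g)
     mpoly.mcoeff m g * \prod_(i < n) Z x i ^+ mpoly.fun_of_multinom m i).
  by apply/funext => x; rewrite mpoly.mevalE.
apply: ccont_sum => m; apply: ccontM; first exact: ccont_cst.
by apply: ccont_prod => i; apply: ccontX.
Qed.

End PartB.
Arguments ccont {R T} F.

Section PartD.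
Variable R : realType.

Lemma le_sum_mem (I : eqType) (r : seq I) (F : I -> R) j :
  (forall i, 0 <= F i) -> j \in r -> F j <= \sum_(i <- r) F i.
Proof.
move=> F0; elim: r => //= x r IH; rewrite in_cons big_cons => /orP [/eqP ->|/IH H].
  by rewrite lerDl sumr_ge0.
by apply: le_trans H _; rewrite lerDr.
Qed.

Lemma sum_const_seq (I : Type) (r : seq I) (c : R) : \sum_(i <- r) c = (size r)%:R * c.
Proof.
elim: r => [|x r IH]; first by rewrite big_nil mul0r.
by rewrite big_cons IH /= -nat1r mulrDl mul1r.
Qed.

Lemma real_dom (I : eqType) (ms : seq I) (a U : I -> R) (b : I) :
  0 < a b -> (forall m, 0 <= a m) -> (forall m, m \in ms -> m != b -> U m < U b) ->
  exists M0, 0 <= M0 /\ forall s, M0 <= s ->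
    \sum_(m <- ms | m != b) a m * expR (s * U m) < a b * expR (s * U b).
Proof.
move=> ab0 a0 HU.
set K : R := (size ms)%:R + 1.
have K0 : 0 < K by rewrite ltr_wpDl.
set eps := a b / K.
have eps0 : 0 < eps by rewrite divr_gt0.
pose T m := a m / (eps * (U b - U m)).
exists (1 + \sum_(m <- ms) `|T m|); split.
  by rewrite addr_ge0 // sumr_ge0.
move=> s Hs.
have s1 : 1 <= s by apply: le_trans Hs; rewrite lerDl sumr_ge0.
have s0 : 0 < s by apply: lt_le_trans s1.
have term : forall m, m \in ms -> m != b -> a m * expR (s * U m) <= eps * expR (s * U b).
  move=> m mms mb.
  have d0 : 0 < U b - U m by rewrite subr_gt0 HU.
  have HT : T m <= s.
    apply: le_trans Hs; apply: le_trans (ler_norm _) _.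
    apply: le_trans (@le_sum_mem _ ms (fun m => `|T m|) m (fun _ => normr_ge0 _) mms) _.
    by rewrite lerDr.
  have -> : s * U b = s * U m + s * (U b - U m) by ring.
  rewrite expRD mulrCA [eps * _]mulrC mulrA [_ * expR (s * U m)]mulrC -mulrA.
  rewrite ler_pM2l ?expR_gt0 //.
  have : a m / (eps * (U b - U m)) <= s by [].
  rewrite ler_pdivrMr; last exact: mulr_gt0 eps0 d0.
  move=> H1.
  apply: le_trans H1 _.
  rewrite mulrCA [expR _ * eps]mulrC ler_pM2l //.
  apply: le_trans (expR_ge1Dx _).
  by rewrite lerDr.
apply: (@le_lt_trans _ _ (\sum_(m <- ms | m != b) eps * expR (s * U b))).
  by rewrite big_seq_cond [X in _ <= X]big_seq_cond; apply: ler_sum => m /andP [mms mb]; apply: term.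
apply: (@le_lt_trans _ _ (\sum_(m <- ms) eps * expR (s * U b))).
  rewrite [X in _ <= X](bigID (fun m => m != b)) /= lerDl sumr_ge0 // => m _.
  by rewrite mulr_ge0 ?expR_ge0 // ltW.
rewrite sum_const_seq mulrA ltr_pM2r ?expR_gt0 //.
rewrite /eps mulrA ltr_pdivrMr // /K mulrDr mulr1 [_ * a b]mulrC ltrDl.
by [].
Qed.

End PartD.

Section PartD2.
Variables (R : realType) (n : nat).
Local Open Scope complex_scope.

Definition dotm (m : mpoly.multinom n) (u : 'rV[R]_n) : R :=
  \sum_i (mpoly.fun_of_multinom m i)%:R * u ord0 i.

Lemma normC_cmod (z : complex R) : `|z| = (cmod z)%:C.
Proof. by case: z. Qed.

Lemma cmod_ge0 (z : complex R) : 0 <= cmod z.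
Proof. exact: sqrtr_ge0. Qed.

Lemma cmod_gt0 (z : complex R) : z != 0 -> 0 < cmod z.
Proof. by move=> z0; rewrite -ltcR -normC_cmod normr_gt0. Qed.

Lemma exists_argmax (I : eqType) (ms : seq I) (U : I -> R) : ms != [::] ->
  exists2 b, b \in ms & forall m, m \in ms -> U m <= U b.
Proof.
elim: ms => // x s IH _; case: s IH => [|y r] IH.
  exists x; first by rewrite mem_seq1.
  by move=> m; rewrite mem_seq1 => /eqP ->.
have [b bin Hb] := IH isT.
have [le|lt] := leP (U x) (U b).
  exists b; first by rewrite in_cons bin orbT.
  by move=> m; rewrite in_cons => /orP [/eqP -> //|/Hb].
exists x; first by rewrite in_cons eqxx.
move=> m; rewrite in_cons => /orP [/eqP -> //|/Hb H]; exact: le_trans H (ltW lt).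
Qed.

Lemma normT (c : complex R) (m : mpoly.multinom n) (z : 'I_n -> complex R)
    (p u : 'rV[R]_n) (s : R) :
  (forall i, cmod (z i) = expR (p ord0 i + s * u ord0 i)) ->
  `|c * \prod_(i < n) z i ^+ mpoly.fun_of_multinom m i| =
    (cmod c * expR (dotm m p) * expR (s * dotm m u))%:C.
Proof.
move=> Hz; rewrite normrM normr_prod normC_cmod.
under eq_bigr => i _ do rewrite normrX normC_cmod Hz -rmorphXn.
rewrite -rmorph_prod -rmorphM -mulrA -expRD; congr (_ %:C); congr (_ * _).
rewrite /dotm mulr_sumr -big_split expR_sum; apply: eq_bigr => i _.
by rewrite -expRM_natl /=; congr expR; rewrite mulrDr mulrCA.
Qed.

Lemma nonvanish (f : mpoly.mpoly n (complex R)) (p u : 'rV[R]_n) :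
  mpoly.msupp f != [::] ->
  (forall m1 m2, m1 \in mpoly.msupp f -> m2 \in mpoly.msupp f ->
     dotm m1 u = dotm m2 u -> m1 = m2) ->
  exists M0, 0 <= M0 /\ forall s, M0 <= s -> forall z : 'I_n -> complex R,
     (forall i, cmod (z i) = expR (p ord0 i + s * u ord0 i)) -> mpoly.meval z f != 0.
Proof.
move=> f0 inj.
set ms := mpoly.msupp f.
have msn : ms != [::] by [].
have [b bms Hb] := @exists_argmax _ ms (fun m => dotm m u) msn.
pose a m := cmod (mpoly.mcoeff m f) * expR (dotm m p).
have ab0 : 0 < a b by rewrite mulr_gt0 ?expR_gt0 // cmod_gt0 // -mpoly.mcoeff_msupp.
have a0 m : 0 <= a m by rewrite mulr_ge0 ?expR_ge0 ?cmod_ge0.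
have HU : forall m, m \in ms -> m != b -> dotm m u < dotm b u.
  move=> m mms mb; rewrite lt_def Hb // andbT; apply/eqP => E; move/eqP: mb; apply.
  exact: inj.
have [M0 [M00 HM]] := @real_dom R _ ms a (fun m => dotm m u) b ab0 a0 HU.
exists M0; split => // s Hs z Hz.
apply/eqP => E.
have Hlt := HM s Hs.
rewrite mpoly.mevalE (bigD1_seq b) ?mpoly.msupp_uniq //= in E.
have E2 := E; move/eqP: E2; rewrite addr_eq0 => /eqP E2.
have : `|mpoly.mcoeff b f * \prod_(i < n) z i ^+ mpoly.fun_of_multinom b i| <=
  \sum_(m <- ms | m != b) `|mpoly.mcoeff m f * \prod_(i < n) z i ^+ mpoly.fun_of_multinom m i|.
  by rewrite E2 normrN ler_norm_sum.
rewrite (@normT _ _ _ p u s Hz).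
under eq_bigr => m _ do rewrite (@normT _ _ _ p u s Hz).
rewrite -rmorph_sum lecR => Hle.
have := lt_le_trans Hlt Hle; by rewrite ltxx.
Qed.

End PartD2.
Arguments dotm {R n}.

Section PartC.
Variables (R : realType) (n : nat).
Local Notation W := (prod_topology (fun _ : 'I_n => (R * R)%type)).
Local Notation X := (R * W)%type.
Local Open Scope complex_scope.

Definition Zf (p u : 'rV[R]_n) (x : X) : 'I_n -> complex R := fun i =>
  (expR (p ord0 i + x.1 * u ord0 i) * (x.2 i).1) +i* (expR (p ord0 i + x.1 * u ord0 i) * (x.2 i).2).

Lemma fst_c : continuous (fun x : X => x.1).
Proof. move=> x; exact: cvg_fst. Qed.

Lemma coord1_c i : continuous (fun x : X => (x.2 i).1).
Proof.
move=> x; apply: (@continuous_comp _ _ _ (fun x : X => x.2 i) fst); last exact: cvg_fst.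
apply: (@continuous_comp _ _ _ (fun x : X => x.2) (fun w : W => w i)); first exact: cvg_snd.
exact: (@proj_continuous _ (fun _ => (R * R)%type) i).
Qed.

Lemma coord2_c i : continuous (fun x : X => (x.2 i).2).
Proof.
move=> x; apply: (@continuous_comp _ _ _ (fun x : X => x.2 i) snd); last exact: cvg_snd.
apply: (@continuous_comp _ _ _ (fun x : X => x.2) (fun w : W => w i)); first exact: cvg_snd.
exact: (@proj_continuous _ (fun _ => (R * R)%type) i).
Qed.

Lemma exp_c (p u : 'rV[R]_n) i : continuous (fun x : X => expR (p ord0 i + x.1 * u ord0 i)).
Proof.
move=> x; apply: (@continuous_comp _ _ _ (fun x : X => p ord0 i + x.1 * u ord0 i) expR); last exact: continuous_expR.
apply: continuousD; first exact: cst_continuous.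
apply: continuousM; [exact: fst_c | exact: cst_continuous].
Qed.

Lemma Zf_ccont p u i : ccont (fun x : X => Zf p u x i).
Proof.
split => x /=.
  exact: (@continuousM _ X (fun x => expR (p ord0 i + x.1 * u ord0 i)) (fun x => (x.2 i).1) x (exp_c p u i x) (coord1_c i x)).
exact: (@continuousM _ X (fun x => expR (p ord0 i + x.1 * u ord0 i)) (fun x => (x.2 i).2) x (exp_c p u i x) (coord2_c i x)).
Qed.

Lemma cmod_Zf p u (x : X) i : (x.2 i).1 ^+ 2 + (x.2 i).2 ^+ 2 = 1 ->
  cmod (Zf p u x i) = expR (p ord0 i + x.1 * u ord0 i).
Proof.
move=> H; rewrite /cmod /Zf /= !exprMn -mulrDr H mulr1 sqrtr_sqr ger0_norm //.
Qed.

Lemma sq_c i : continuous (fun x : X => (x.2 i).1 ^+ 2 + (x.2 i).2 ^+ 2).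
Proof.
have -> : (fun x : X => (x.2 i).1 ^+ 2 + (x.2 i).2 ^+ 2) =
  ((fun x : X => (x.2 i).1) \* (fun x : X => (x.2 i).1)) + ((fun x : X => (x.2 i).2) \* (fun x : X => (x.2 i).2)).
  by apply/funext => x; rewrite /= !expr2.
move=> x.
have h1 := continuousM (coord1_c i x) (coord1_c i x).
have h2 := continuousM (coord2_c i x) (coord2_c i x).
have h3 := continuousD h1 h2.
exact: h3.
Qed.

Lemma complex_eq0 (z : complex R) : z = 0 <-> complex.Re z = 0 /\ complex.Im z = 0.
Proof. by case: z => a b /=; split; [case=> -> -> | case=> -> ->]. Qed.

End PartC.
Arguments Zf {R n}.

Section Main.
Variables (R : realType) (n : nat).

Definition mv (m : mpoly.multinom n) : 'rV[R]_n := \row_i (mpoly.fun_of_multinom m i)%:R.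

Lemma dotm_dotv m u : dotm m u = dotv (mv m) u.
Proof. by apply: eq_bigr => i _; rewrite mxE. Qed.

Lemma dotvB (a b u : 'rV[R]_n) : dotv (a - b) u = dotv a u - dotv b u.
Proof. by rewrite /dotv -sumrB; apply: eq_bigr => i _; rewrite !mxE mulrBl. Qed.

Lemma dotvN (d u : 'rV[R]_n) : dotv d (- u) = - dotv d u.
Proof. by rewrite /dotv -sumrN; apply: eq_bigr => i _; rewrite !mxE mulrN. Qed.

Lemma mv_inj : injective mv.
Proof.
move=> m1 m2 /rowP H; apply/mpoly.mnmP => i; have := H i; rewrite !mxE.
by move/eqP; rewrite eqr_nat => /eqP.
Qed.

Definition dsf (ms : seq (mpoly.multinom n)) : seq 'rV[R]_n :=
  seq.filter (fun d => d != 0) [seq a - b | a <- map mv ms, b <- map mv ms].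

Lemma inj_of_good ms u : (forall d, d \in dsf ms -> dotv d u != 0) ->
  forall m1 m2, m1 \in ms -> m2 \in ms -> dotm m1 u = dotm m2 u -> m1 = m2.
Proof.
move=> G m1 m2 h1 h2 E.
have [e|ne] := eqVneq (mv m1 - mv m2) 0.
  by apply: mv_inj; apply/eqP; rewrite -subr_eq0 e.
have : mv m1 - mv m2 \in dsf ms.
  by rewrite mem_filter ne /=; apply: allpairs_f; apply: map_f.
by move/G; rewrite dotvB -!dotm_dotv E subrr eqxx.
Qed.

End Main.

Theorem mainTheorem4 (R : realType) (n : nat) (V : set ('I_n -> complex R)) :
  is_subvariety V -> V `<` @torus R n ->
  exists N : set 'rV[R]_n,
    [/\ N `<=` @sphere R n, closed N, nowhere_dense_in (@sphere R n) N &
        forall u, @sphere R n u -> ~ N u ->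
          forall p : 'rV[R]_n, compact (amoeba V `&` line p u)].
Proof.
move=> [S VE] [Vsub Vneq].
have [f [Sf [z0 [tz0 fz0]]]] :
    exists f, S f /\ exists z0, torus z0 /\ mpoly.meval z0 f != 0.
  apply: contrapT => H; apply: Vneq => z tz.
  rewrite VE; split => // g Sg; apply: contrapT => hg; apply: H.
  by exists g; split => //; exists z; split => //; apply/eqP.
have f0 : mpoly.msupp f != [::].
  by apply: contra fz0 => /eqP e; rewrite mpoly.mevalE e big_nil.
set ms := mpoly.msupp f.
set ds := @dsf R n ms.
have dsnz : all (fun d => d != 0) ds.
  by apply/allP => d; rewrite mem_filter => /andP [].
exists [set u | sphere u /\ has (fun d => dotv d u == 0) ds]; split.
- by move=> u [].
- have -> : [set u | sphere u /\ has (fun d => dotv d u == 0) ds] =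
     @sphere R n `&` ((fun u => \prod_(d <- ds) dotv d u) @^-1` [set x | x = 0]).
    apply/seteqP; split => u /= [su H]; split => //.
      by apply/eqP; rewrite prodf_seq_eq0.
    by move/eqP: H; rewrite prodf_seq_eq0.
  apply: closedI; first exact: sphere_closed.
  move: (@closed_eq R 0); apply: (proj1 (continuous_closedP _)).
  exact: (@prod_cont R 'rV[R]_n _ ds (fun d u => dotv d u) (fun d => @dotv_cont R n d)).
- move=> O oO HON; apply/seteqP; split => // u [Ou su].
  have [v [Ov sv Av]] := @avoid R n ds dsnz O u oO Ou su.
  have [_ /hasP [d dds /eqP dz]] := HON v (conj Ov sv).
  by move/allP: Av => /(_ d dds); rewrite dz eqxx.
move=> u su Nu p.
have good : forall d, d \in ds -> dotv d u != 0.
  move=> d dds; apply/negP => /eqP dz; apply: Nu; split => //.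
  by apply/hasP; exists d => //; rewrite dz.
have good' : forall d, d \in ds -> dotv d (- u) != 0.
  by move=> d /good; rewrite dotvN oppr_eq0.
have [M1 [M10 H1]] := @nonvanish R n f p u f0 (@inj_of_good R n ms u good).
have [M2 [M20 H2]] := @nonvanish R n f p (- u) f0 (@inj_of_good R n ms (- u) good').
have cmodE : forall z s, V z -> Log z = p + s *: u ->
    forall i, cmod (z i) = expR (p ord0 i + s * u ord0 i).
  move=> z s Vz E i; have tz : torus z by apply: Vsub.
  have := congr1 (fun M : 'rV[R]_n => M ord0 i) E; rewrite !mxE => E'.
  by rewrite -E' lnK // posrE cmod_gt0 // (tz i).
have fzero : forall z, V z -> mpoly.meval z f = 0.
  by move=> z; rewrite VE => -[_ H]; apply: H.
set M := M1 + M2.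
have bound : forall z s, V z -> Log z = p + s *: u -> - M <= s <= M.
  move=> z s Vz E.
  have s1 : s < M1.
    rewrite ltNge; apply/negP => h.
    by have := H1 s h z (cmodE z s Vz E); rewrite fzero // eqxx.
  have s2 : - s < M2.
    rewrite ltNge; apply/negP => h.
    have : mpoly.meval z f != 0.
      apply: (H2 (- s) h z) => i.
      by rewrite (cmodE z s Vz E) mxE mulrNN.
    by rewrite fzero // eqxx.
  by rewrite /M; apply/andP; split; lra.
pose D := [set x : (R * prod_topology (fun _ : 'I_n => (R * R)%type))%type |
  x.1 \in `[- M, M] /\ forall i, (x.2 i).1 ^+ 2 + (x.2 i).2 ^+ 2 = 1].
pose Zs := D `&` \bigcap_(g in S) [set x | mpoly.meval (Zf p u x) g = 0].
have cZs : compact Zs.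
  apply: compact_closedI.
    pose B := [set w : prod_topology (fun _ : 'I_n => (R * R)%type) |
                forall i, (`[-1, 1] `*` `[-1, 1]) (w i)].
    pose C := [set x : (R * prod_topology (fun _ : 'I_n => (R * R)%type))%type |
                forall i, (x.2 i).1 ^+ 2 + (x.2 i).2 ^+ 2 = 1].
    have -> : D = (`[- M, M] `*` B) `&` C.
      apply/seteqP; split => x.
        move=> [Hx1 Hx2]; split => //; split => // i; have := Hx2 i.
        by case: (x.2 i) => a b /= h; rewrite /= !in_itv /=; split; apply/andP; split; nra.
      by move=> [[Hx1 _] Hx2]; split.
    apply: compact_closedI.
      apply: compact_setX; first exact: segment_compact.
      apply: (@tychonoff _ (fun _ => (R * R)%type) (fun _ => `[-1, 1] `*` `[-1, 1])) => i.
      by apply: compact_setX; exact: segment_compact.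
    have -> : C = \bigcap_(i in setT) [set x : (R * prod_topology (fun _ : 'I_n => (R * R)%type))%type |
                (x.2 i).1 ^+ 2 + (x.2 i).2 ^+ 2 = 1].
      by apply/seteqP; split => x /=; [move=> H i _; exact: H | move=> H i; exact: H i I].
    apply: closed_bigI => i _.
    move: (@closed_eq R 1); apply: (proj1 (continuous_closedP _)).
    exact: (@sq_c R n i).
  apply: closed_bigI => g Sg.
  have -> : [set x | mpoly.meval (Zf p u x) g = 0] =
      [set x | complex.Re (mpoly.meval (Zf p u x) g) = 0] `&`
      [set x | complex.Im (mpoly.meval (Zf p u x) g) = 0].
    by apply/seteqP; split => x /=; rewrite complex_eq0.
  have [c1 c2] := @ccont_meval R _ n (Zf p u) g (@Zf_ccont R n p u).
  apply: closedI.
    by move: (@closed_eq R 0); apply: (proj1 (continuous_closedP _)).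
  by move: (@closed_eq R 0); apply: (proj1 (continuous_closedP _)).
have -> : amoeba V `&` line p u =
    (fun x : (R * prod_topology (fun _ : 'I_n => (R * R)%type))%type => p + x.1 *: u) @` Zs.
  apply/seteqP; split.
    move=> x [[z Vz <-] [s _ E]].
    have tz : torus z by apply: Vsub.
    have sM := bound z s Vz (esym E).
    have cE := cmodE z s Vz (esym E).
    pose w : prod_topology (fun _ : 'I_n => (R * R)%type) :=
      fun i => (complex.Re (z i) / cmod (z i), complex.Im (z i) / cmod (z i)).
    have Zz : Zf p u (s, w) = z.
      apply/funext => i; rewrite /Zf /= -(cE i).
      have c0 : cmod (z i) != 0 by rewrite gt_eqF // cmod_gt0 // (tz i).
      rewrite !(mulrC (cmod (z i))) !divfK //.
      by case: (z i).
    exists (s, w); last by rewrite /= E.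
    split.
      split => //= i.
      have c0 : 0 < cmod (z i) by rewrite cmod_gt0 // (tz i).
      have c2 : cmod (z i) ^+ 2 = complex.Re (z i) ^+ 2 + complex.Im (z i) ^+ 2.
        by rewrite /cmod sqr_sqrtr // addr_ge0 // sqr_ge0.
      rewrite !expr_div_n -mulrDl -c2 divff //.
      by rewrite expf_neq0 // gt_eqF.
    by move=> g Sg /=; rewrite Zz; move: Vz; rewrite VE => -[_]; apply.
  move=> x [[s w] [[Hs Hw] Hg] <-] /=.
  set z := Zf p u (s, w).
  have cZ i : cmod (z i) = expR (p ord0 i + s * u ord0 i) by apply: (@cmod_Zf R n p u (s, w) i (Hw i)).
  have tz : torus z.
    move=> i; apply/negP => /eqP e.
    have := expR_gt0 (p ord0 i + s * u ord0 i).
    by rewrite -cZ e /cmod /= expr0n /= addr0 sqrtr0 ltxx.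
  have Vz : V z by rewrite VE; split => // g Sg; exact: Hg g Sg.
  split.
    exists z => //; apply/rowP => i; rewrite !mxE cZ expRK.
    by [].
  by exists s.
apply: continuous_compact => //; apply: continuous_subspaceT => x.
have h1 : {for x, continuous (fun x : (R * prod_topology (fun _ : 'I_n => (R * R)%type))%type => x.1 *: u)}.
  by apply: continuousZ; [exact: fst_c | exact: cst_continuous].
have h0 : {for x, continuous (fun _ : (R * prod_topology (fun _ : 'I_n => (R * R)%type))%type => p)} by move=> ?; exact: cst_continuous.
have h2 := continuousD h0 h1.
exact: h2.
Qed.
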